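(* The function $q\mapsto (p(q)-c)\big(1-F(p(q)/q)\big)$ is strictly convex on $Q$.
   Context: Let $0<q_\ell<q_h<\infty$, $Q=[q_\ell,q_h]$, and let $c$ be a real number with $0<c<q_\ell$. Let $F$ be a probability distribution on $[0,1]$ with support $[0,1]$ admitting a twice continuously differentiable density $f:(0,1)\to\mathbb{R}_{>0}$. Define $r(v)=(1-F(v))/f(v)$ and $\psi(v)=v-r(v)$ on $(0,1)$, and assume $\psi'(v)>0$ whenever $\psi(v)>0$. For $q\in Q$, $p(q)$ is the unique maximizer over $p\in\mathbb{R}$ of $(p-c)\big(1-F(p/q)\big)$. *)

(* Defs.v *)
From Stdlib Require Import Reals.
From Coquelicot Require Import Coquelicot.
Open Scope R_scope.

Definition rfun (F f : R -> R) (v : R) : R := (1 - F v) / f v.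
Definition psi (F f : R -> R) (v : R) : R := v - rfun F f v.

(* Profit at unit value q and price x: (x - c)(1 - F(x/q)). *)
Definition profit (F : R -> R) (c q x : R) : R := (x - c) * (1 - F (x / q)).

Definition strictly_convex_on (a b : R) (g : R -> R) : Prop :=
  forall x y t, a <= x <= b -> a <= y <= b -> x <> y -> 0 < t < 1 ->
    g (t * x + (1 - t) * y) < t * g x + (1 - t) * g y.

(* Main.v *)
Require Import Defs.
From Stdlib Require Import Reals Lra Psatz.
From Coquelicot Require Import Coquelicot.
Open Scope R_scope.

Lemma fermat_max (h : R -> R) (v l : R) :
  is_derive h v l -> (forall w, h w <= h v) -> l = 0.
Proof.
  intros Hd Hm.
  apply is_derive_Reals in Hd.
  assert (pr : derivable_pt h v) by (exists l; exact Hd).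
  rewrite <- (derive_pt_eq_0 h v l pr Hd).
  apply (deriv_maximum h (v - 1) (v + 1) v pr); try lra.
  intros; apply Hm.
Qed.

Lemma hderiv (F f : R -> R) (q c v : R) :
  is_derive F v (f v) ->
  is_derive (fun w => (q * w - c) * (1 - F w)) v
    (q * (1 - F v) - (q * v - c) * f v).
Proof.
  intros HF.
  eapply is_derive_ext_loc.
  { apply filter_forall. intros w. reflexivity. }
  assert (H1 : is_derive (fun w => q * w - c) v q).
  { auto_derive; [exact I | ring]. }
  assert (H2 : is_derive (fun w => 1 - F w) v (0 - f v)).
  { apply (Derive.is_derive_minus (fun _ => 1) F). assert (H0 : is_derive (fun _ : R => 1) v 0) by (auto_derive; [exact I | ring]). exact H0. exact HF. }
  pose proof (Derive.is_derive_mult _ _ v _ _ H1 H2) as H.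
  simpl in H.
  replace (q * (1 - F v) - (q * v - c) * f v) with
    (q * (1 - F v) + (q * v - c) * (0 - f v)) by ring.
  exact H.
Qed.

Theorem lemma2 (ql qh c : R) (F f : R -> R) (p : R -> R)
  (* parameters *)
  (Hql : 0 < ql) (Hqlqh : ql < qh) (Hc0 : 0 < c) (Hcql : c < ql)
  (* F is the CDF of a distribution on [0,1] with support [0,1] and density f *)
  (HF0 : forall x, x <= 0 -> F x = 0)
  (HF1 : forall x, 1 <= x -> F x = 1)
  (HFcont : forall x, continuous F x)
  (HFder : forall v, 0 < v < 1 -> is_derive F v (f v))
  (* f : (0,1) -> R_{>0}, twice continuously differentiable *)
  (Hfpos : forall v, 0 < v < 1 -> 0 < f v)
  (Hf1 : forall v, 0 < v < 1 -> ex_derive f v)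
  (Hf2 : forall v, 0 < v < 1 -> ex_derive_n f 2 v)
  (Hf2c : forall v, 0 < v < 1 -> continuous (Derive_n f 2) v)
  (* regularity: psi' > 0 wherever psi > 0 *)
  (Hpsi : forall v, 0 < v < 1 -> 0 < psi F f v -> 0 < Derive (psi F f) v)
  (* p q is the unique maximizer of x |-> (x - c)(1 - F(x/q)) *)
  (Hp : forall q, ql <= q <= qh -> forall x, x <> p q ->
          profit F c q x < profit F c q (p q)) :
  strictly_convex_on ql qh (fun q => profit F c q (p q)).
Proof.
  assert (Hint : forall q, ql <= q <= qh -> 0 < p q / q < 1).
  { intros q Hq. assert (Hq0 : 0 < q) by lra.
    split.
    - destruct (Rle_lt_dec (p q / q) 0) as [Hle|Hlt]; [|exact Hlt].
      exfalso.
      assert (Hpq : p q <= 0).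
      { assert (p q = (p q / q) * q) by (field; lra). nra. }
      destruct (Req_dec q (p q)) as [E|E]; [lra|].
      pose proof (Hp q Hq q E) as H.
      unfold profit in H. rewrite (HF0 _ Hle) in H.
      rewrite HF1 in H by (right; field; lra). nra.
    - destruct (Rlt_le_dec (p q / q) 1) as [Hlt|Hge]; [exact Hlt|].
      exfalso.
      assert (E : p q + q <> p q) by lra.
      pose proof (Hp q Hq _ E) as H.
      unfold profit in H. rewrite (HF1 _ Hge) in H.
      rewrite HF1 in H.
      + lra.
      + assert ((p q + q) / q = p q / q + 1) by (field; lra). lra. }
  assert (Hh : forall q, ql <= q <= qh -> forall w,
             (q * w - c) * (1 - F w) <= profit F c q (p q)).
  { intros q Hq w. assert (Hq0 : 0 < q) by lra.
    replace ((q * w - c) * (1 - F w)) with (profit F c q (q * w)).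
    - destruct (Req_dec (q * w) (p q)) as [E|E].
      + rewrite E; lra.
      + left; apply Hp; auto.
    - unfold profit. replace (q * w / q) with w by (field; lra). reflexivity. }
  intros x y t Hx Hy Hxy Ht.
  set (q := t * x + (1 - t) * y).
  assert (Hq : ql <= q <= qh) by (unfold q; split; nra).
  assert (Hq0 : 0 < q) by lra.
  set (v := p q / q).
  assert (Hv := Hint q Hq). fold v in Hv.
  assert (Hpq : profit F c q (p q) =
     t * ((x * v - c) * (1 - F v)) + (1 - t) * ((y * v - c) * (1 - F v))).
  { unfold profit. fold v.
    replace (p q) with (q * v) by (unfold v; field; lra).
    unfold q; ring. }
  rewrite Hpq.
  pose proof (Hh x Hx v) as H1. pose proof (Hh y Hy v) as H2.
  destruct (Req_dec ((x * v - c) * (1 - F v)) (profit F c x (p x))) as [E1|E1];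
  [destruct (Req_dec ((y * v - c) * (1 - F v)) (profit F c y (p y))) as [E2|E2]|].
  - exfalso.
    assert (D1 : x * (1 - F v) - (x * v - c) * f v = 0).
    { apply (fermat_max (fun w => (x * w - c) * (1 - F w)) v).
      - apply hderiv. apply HFder; lra.
      - intros w. rewrite E1. apply Hh; auto. }
    assert (D2 : y * (1 - F v) - (y * v - c) * f v = 0).
    { apply (fermat_max (fun w => (y * w - c) * (1 - F w)) v).
      - apply hderiv. apply HFder; lra.
      - intros w. rewrite E2. apply Hh; auto. }
    assert (Hf : 0 < f v) by (apply Hfpos; lra).
    assert (K : (x - y) * (1 - F v - v * f v) = 0) by lra.
    apply Rmult_integral in K. destruct K as [K|K]; [lra|].
    assert (c * f v = 0) by nra. nra.
  - assert ((y * v - c) * (1 - F v) < profit F c y (p y)) by lra. nra.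
  - assert ((x * v - c) * (1 - F v) < profit F c x (p x)) by lra. nra.
Qed.
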